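(* Let $\mathbb{K}$ be a totally ordered field which is Cantor complete but not algebraically saturated. Then (i) $\mathbb{K}$ has a strictly increasing unbounded sequence; (ii) $\mathbb{K}$ is sequentially complete.
   Context: Cantor complete: every countable family of closed bounded intervals in $\mathbb{K}$ with the finite intersection property has non-empty intersection. Algebraically saturated: every countable family of open intervals in $\mathbb{K}$ with the finite intersection property has non-empty intersection. Sequentially complete: every Cauchy sequence converges in the order topology, where $(a_n)$ is Cauchy if for every $\epsilon\in\mathbb{K}$, $\epsilon>0$, there is $N$ with $|a_n-a_m|<\epsilon$ for $n,m\ge N$. *)

(* Defs.v *)
(* A totally ordered field is a realFieldType. *)
From HB Require Import structures.
From mathcomp Require Import all_boot all_order all_algebra.
Set Implicit Arguments. Unset Strict Implicit. Unset Printing Implicit Defensive.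
Import Order.TTheory GRing.Theory Num.Theory.
Local Open Scope ring_scope.

(* A countable family of sets indexed by nat (finite families are covered by repetition). *)
Definition fip (K : realFieldType) (A : nat -> K -> Prop) : Prop :=
  forall s : seq nat, exists x : K, forall i, i \in s -> A i x.

Definition closed_itv (K : realFieldType) (a b : K) : K -> Prop :=
  fun x => a <= x /\ x <= b.

Definition open_itv (K : realFieldType) (a b : K) : K -> Prop :=
  fun x => a < x /\ x < b.

Definition cantor_complete (K : realFieldType) : Prop :=
  forall a b : nat -> K, (forall n, a n <= b n) ->
    fip (fun n => closed_itv (a n) (b n)) ->
    exists x : K, forall n, closed_itv (a n) (b n) x.

Definition algebraically_saturated (K : realFieldType) : Prop :=
  forall a b : nat -> K,
    fip (fun n => open_itv (a n) (b n)) ->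
    exists x : K, forall n, open_itv (a n) (b n) x.

Definition cauchy (K : realFieldType) (u : nat -> K) : Prop :=
  forall eps : K, 0 < eps -> exists N : nat,
    forall n m, (N <= n)%N -> (N <= m)%N -> `|u n - u m| < eps.

Definition converges_to (K : realFieldType) (u : nat -> K) (l : K) : Prop :=
  forall eps : K, 0 < eps -> exists N : nat, forall n, (N <= n)%N -> `|u n - l| < eps.

Definition sequentially_complete (K : realFieldType) : Prop :=
  forall u : nat -> K, cauchy u -> exists l : K, converges_to u l.

(* Main.v *)
Require Import Defs.
From HB Require Import structures.
From mathcomp Require Import all_boot all_order all_algebra.
From Stdlib Require Import Classical ClassicalEpsilon.
Import Order.TTheory GRing.Theory Num.Theory.
Local Open Scope ring_scope.

Lemma ub_seq (s : seq nat) : exists N, forall i, i \in s -> (i <= N)%N.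
Proof.
elim: s => [|j s [N HN]]; first by exists 0%N.
exists (maxn j N) => i; rewrite inE => /orP [/eqP -> | /HN H].
  exact: leq_maxl.
exact: leq_trans H (leq_maxr _ _).
Qed.

Lemma pos1 (K : realFieldType) (x : K) : 0 < `|x| + 1.
Proof. apply: lt_le_trans ltr01 _; by rewrite lerDr. Qed.

Section S.
Variable K : realFieldType.

Fixpoint runmax (a : nat -> K) (n : nat) : K :=
  if n is m.+1 then Order.max (runmax a m) (a n) else a 0%N.

Lemma runmax_ge a n k : (k <= n)%N -> a k <= runmax a n.
Proof.
elim: n k => [|n IH] k; first by rewrite leqn0 => /eqP ->.
rewrite leq_eqVlt => /orP [/eqP ->|]; rewrite /= le_max.
  by rewrite lexx orbT.
by rewrite ltnS => /IH ->.
Qed.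

Lemma runmax_ex a n : exists k, (k <= n)%N /\ runmax a n = a k.
Proof.
elim: n => [|n [k [Hk Hr]]]; first by exists 0%N.
rewrite /= Hr /Order.max; case: ifP => _.
  by exists n.+1.
by exists k; split => //; apply: leq_trans Hk (leqnSn _).
Qed.

Lemma runmax_mono a n m : (n <= m)%N -> runmax a n <= runmax a m.
Proof.
move=> nm; have [k [Hk ->]] := runmax_ex a n.
apply: runmax_ge; exact: leq_trans Hk nm.
Qed.

Fixpoint incr (c : nat -> K) (n : nat) : K :=
  if n is m.+1 then incr c m + (`|c n| + 1) else `|c 0%N| + 1.

Lemma incr_ge c n : `|c n| + 1 <= incr c n.
Proof.
elim: n => [|n IH] //=.
rewrite -{1}(add0r (`|c n.+1| + 1)) lerD2r.
apply: le_trans IH; apply: addr_ge0 => //.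
Qed.

Lemma inf0 : cantor_complete K -> ~ algebraically_saturated K ->
  exists d : nat -> K, (forall n, 0 < d n) /\
    forall eps, 0 < eps -> exists n, d n <= eps.
Proof.
move=> cc nas.
have [a Ha] := not_all_ex_not _ _ nas.
have [b Hb] := not_all_ex_not _ _ Ha.
have [fipab nex] := imply_to_and _ _ Hb.
pose A := runmax a.
pose B n := - runmax (fun k => - b k) n.
have hAa : forall n k, (k <= n)%N -> a k <= A n by move=> n k; exact: runmax_ge.
have hBb : forall n k, (k <= n)%N -> B n <= b k.
  by move=> n k kn; rewrite /B lerNl; exact: (runmax_ge (fun k => - b k)).
have hmA : forall n m, (n <= m)%N -> A n <= A m by move=> n m; exact: runmax_mono.
have hmB : forall n m, (n <= m)%N -> B m <= B n.
  by move=> n m nm; rewrite /B lerN2; exact: runmax_mono.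
have hAB : forall n m, A n < B m.
  move=> n m; pose N := maxn n m.
  have [x Hx] := fipab (iota 0 N.+1).
  have Hk : forall k, (k <= N)%N -> a k < x /\ x < b k.
    by move=> k kN; apply: Hx; rewrite mem_iota add0n ltnS kN.
  have HA : A N < x.
    by rewrite /A; have [k [kN ->]] := runmax_ex a N; case: (Hk k kN).
  have HB : x < B N.
    have [k [kN Hr]] := runmax_ex (fun k => - b k) N.
    by rewrite /B Hr opprK; case: (Hk k kN).
  apply: le_lt_trans (hmA n N (leq_maxl _ _)) _.
  apply: lt_le_trans (hmB m N (leq_maxr _ _)).
  exact: lt_trans HA HB.
have [x Hx] : exists x, forall n, closed_itv (A n) (B n) x.
  apply: cc; first by move=> n; apply: ltW.
  move=> s; have [N HN] := ub_seq s.
  exists (A N) => i /HN iN; split; first exact: hmA.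
  apply: le_trans (hmB _ _ iN); exact: ltW.
have [k Hk] : exists k, ~ (A k < x /\ x < B k).
  apply: (not_all_ex_not _ (fun k => A k < x /\ x < B k)) => H; apply: nex; exists x => n.
  have [h1 h2] := H n; split.
    exact: le_lt_trans (hAa n n (leqnn _)) h1.
  exact: lt_le_trans h2 (hBb n n (leqnn _)).
case: (Hx k) => xk1 xk2.
case Hak: (A k < x).
  have xB : x = B k.
    apply/eqP; rewrite eq_le xk2 /= leNgt; apply/negP => h; exact: Hk.
  exists (fun n => x - A n); split.
    move=> n; rewrite subr_gt0 xB; exact: hAB.
  move=> eps eps0; apply: NNPP => hne; apply: nex; exists (x - eps) => n.
  have hn : eps < x - A n.
    rewrite ltNge; apply/negP => h; apply: hne; by exists n.
  case: (Hx n) => h1 h2; split.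
    apply: le_lt_trans (hAa n n (leqnn _)) _.
    by rewrite ltrBrDr addrC -ltrBrDr.
  apply: lt_le_trans (hBb n n (leqnn _)).
  by apply: lt_le_trans h2; rewrite ltrBlDr ltrDl.
have xA : x = A k.
  apply/eqP; rewrite eq_le xk1 andbT leNgt Hak //.
exists (fun n => B n - x); split.
  move=> n; rewrite subr_gt0 xA; exact: hAB.
move=> eps eps0; apply: NNPP => hne; apply: nex; exists (x + eps) => n.
have hn : eps < B n - x.
  rewrite ltNge; apply/negP => h; apply: hne; by exists n.
case: (Hx n) => h1 h2; split.
  apply: le_lt_trans (hAa n n (leqnn _)) _.
  by apply: le_lt_trans h1 _; rewrite ltrDl.
apply: lt_le_trans (hBb n n (leqnn _)).
by rewrite addrC -ltrBrDr.
Qed.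
End S.

Theorem mainTheorem18 (K : realFieldType) :
  cantor_complete K -> ~ algebraically_saturated K ->
  (exists u : nat -> K, (forall n, u n < u n.+1) /\ (forall M : K, exists n, M < u n))
  /\ sequentially_complete K.
Proof.
move=> cc nas; have [d [dpos dinf]] := @inf0 K cc nas; split.
  exists (@incr K (fun n => (d n)^-1)); split.
    by move=> n /=; rewrite ltrDl pos1.
  move=> M; pose M' := `|M| + 1.
  have M'0 : 0 < M' by apply: pos1.
  have [n Hn] := dinf (M'^-1) (ltac:(by rewrite invr_gt0)).
  exists n; apply: lt_le_trans (@incr_ge K _ n).
  apply: le_lt_trans (ler_norm M) _.
  apply: (@lt_le_trans _ _ M'); first by rewrite ltrDl.
  have h : M' <= (d n)^-1.
    by rewrite -lef_pV2 ?invrK // ?posrE ?invr_gt0.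
  apply: le_trans h _; apply: le_trans (ler_norm _) _; by rewrite lerDl.
move=> u cu.
have hN : forall k, {N : nat | forall n m, (N <= n)%N -> (N <= m)%N -> `|u n - u m| < d k}.
  move=> k; apply: constructive_indefinite_description; exact: cu.
pose N k := sval (hN k).
have HN : forall k n m, (N k <= n)%N -> (N k <= m)%N -> `|u n - u m| < d k.
  move=> k; exact: (svalP (hN k)).
have [l Hl] : exists l, forall k, closed_itv (u (N k) - d k) (u (N k) + d k) l.
  apply: cc.
    by move=> k; rewrite lerD2l -subr_ge0 opprK addr_ge0 // ltW.
  move=> s; have [M HM] := ub_seq (map N s).
  exists (u M) => i iis; have iM := HM _ (map_f N iis).
  have := HN i M (N i) iM (leqnn _); rewrite ltr_norml => /andP [h1 h2].
  split; apply: ltW.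
    by rewrite addrC; rewrite ltrBrDr in h1.
  by rewrite addrC -ltrBlDr.
exists l => eps eps0.
have [k Hk] := dinf (eps / 2) (divr_gt0 eps0 (ltr0Sn _ 1)).
exists (N k) => n Nn.
apply: le_lt_trans (ler_distD (u (N k)) _ _) _.
rewrite [eps]splitr; apply: ltr_leD.
  apply: lt_le_trans Hk; exact: HN.
apply: le_trans Hk; case: (Hl k) => h1 h2; rewrite ler_norml; apply/andP; split.
  by rewrite lerBrDr addrC lerBlDr.
by rewrite lerBlDr addrC -lerBlDr.
Qed.
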